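(* For every positive integer $n$, $k(n)\ge\sqrt{n}$.
   Context: A system on $n$ elements is a triple $(\mathcal{F},w,s)$ where $\mathcal{F}=(F_1,\dots,F_m)$ is a collection of subsets of $[n]$, $w\in[0,1]^m$ with $\sum_i w_i=1$, and $s\in[0,1]^{m\times m\times n}$ with $\sum_p s_{ijp}=1$ for all $i,j$. It is intersecting if $s_{ijp}>0$ implies $p\in F_i\cap F_j$. It is balanced if for all $p\in[n]$, $\sum_{i,j} w_iw_js_{ijp}=1/n$. Its cardinality is the size of the largest set in $\mathcal{F}$. $k(n)$ is the minimum $k$ such that there exists a balanced intersecting system on $n$ elements with cardinality $k$. *)

(* Defs.v *)
From HB Require Import structures.
From mathcomp Require Import all_boot all_order all_algebra.
From mathcomp Require Import reals.
Set Implicit Arguments. Unset Strict Implicit. Unset Printing Implicit Defensive.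
Import Order.TTheory GRing.Theory Num.Theory.
Local Open Scope ring_scope.

Section Systems.
Variable R : realType.

Definition is_system (n m : nat) (F : 'I_m -> {set 'I_n}) (w : 'I_m -> R)
    (s : 'I_m -> 'I_m -> 'I_n -> R) : Prop :=
  [/\ (forall i, 0 <= w i <= 1),
      \sum_(i < m) w i = 1,
      (forall i j p, 0 <= s i j p <= 1) &
      (forall i j, \sum_(p < n) s i j p = 1)].

Definition intersecting (n m : nat) (F : 'I_m -> {set 'I_n})
    (s : 'I_m -> 'I_m -> 'I_n -> R) : Prop :=
  forall i j p, 0 < s i j p -> p \in F i :&: F j.

Definition balanced (n m : nat) (w : 'I_m -> R)
    (s : 'I_m -> 'I_m -> 'I_n -> R) : Prop :=
  forall p : 'I_n, \sum_(i < m) \sum_(j < m) w i * w j * s i j p = n%:R^-1.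

End Systems.

Definition cardinality (n m : nat) (F : 'I_m -> {set 'I_n}) : nat :=
  \max_(i < m) #|F i|.

(* Main.v *)
Require Import Defs.
From HB Require Import structures.
From mathcomp Require Import all_boot all_order all_algebra.
From mathcomp Require Import reals.
From mathcomp Require Import lra.
Import Order.TTheory GRing.Theory Num.Theory.
Local Open Scope ring_scope.

Theorem proposition1 (R : realType) (n : nat) (hn : (0 < n)%N) (m : nat)
    (F : 'I_m -> {set 'I_n}) (w : 'I_m -> R) (s : 'I_m -> 'I_m -> 'I_n -> R) :
  is_system F w s -> intersecting F s -> balanced w s ->
  Num.sqrt (n%:R : R) <= (cardinality F)%:R.
Proof.
move=> [hw hsw hs hss] hint hbal.
set a := fun p : 'I_n => \sum_(i < m) w i * (p \in F i)%:R.
have w0 : forall i, 0 <= w i by move=> i; case/andP: (hw i).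
have npos : (0 : R) < n%:R by rewrite ltr0n.
set sq := Num.sqrt (n%:R : R).
have sqsq : sq * sq = n%:R by rewrite -expr2 sqr_sqrtr // ltW.
have sqpos : 0 < sq by rewrite sqrtr_gt0.
have step1 : forall p, n%:R^-1 <= a p * a p.
  move=> p; rewrite -(hbal p) /a mulr_suml; apply: ler_sum => i _.
  rewrite mulr_sumr; apply: ler_sum => j _.
  have [s0 s1] := andP (hs i j p).
  have wij : 0 <= w i * w j by rewrite mulr_ge0.
  case: (ltrP 0 (s i j p)) => hsp.
    have := hint i j p hsp; rewrite inE => /andP [-> ->] /=.
    rewrite !mulr1; rewrite ler_piMr //.
  have -> : s i j p = 0 by apply/eqP; rewrite eq_le hsp s0.
  rewrite mulr0; apply: mulr_ge0; apply: mulr_ge0 => //; exact: ler0n.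
have a0 : forall p, 0 <= a p.
  move=> p; apply: sumr_ge0 => i _; apply: mulr_ge0 => //; exact: ler0n.
have step2 : forall p, 1 <= sq * a p.
  move=> p; have h1 := step1 p; have h2 := a0 p.
  have h3 : 1 <= n%:R * (a p * a p).
    have := ler_wpM2l (ltW npos) h1; rewrite mulfV //; exact: lt0r_neq0.
  rewrite -sqsq mulrACA in h3.
  have hx : 0 <= sq * a p by rewrite mulr_ge0 // ltW.
  move: h3 hx; set x := sq * a p => h3 hx.
  case: (lerP 1 x) => // hx1.
  have : x * x <= x * 1 by rewrite ler_wpM2l // ltW.
  rewrite mulr1 => h4; have := le_trans h3 h4; rewrite leNgt hx1 //.
have step3 : \sum_p a p = \sum_(i < m) w i * #|F i|%:R.
  rewrite /a exchange_big /=; apply: eq_bigr => i _; rewrite -mulr_sumr; congr (_ * _).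
  rewrite -sum1_card natr_sum [RHS]big_mkcond; apply: eq_bigr => p _.
  by case: (p \in F i).
have step4 : \sum_p a p <= (cardinality F)%:R.
  rewrite step3; apply: (@le_trans _ _ (\sum_(i < m) w i * (cardinality F)%:R)); last first.
    by rewrite -mulr_suml hsw mul1r.
  apply: ler_sum => i _.
  apply: ler_wpM2l; first exact: w0.
  rewrite ler_nat; exact: (leq_bigmax (F := fun i => #|F i|)).
have step5 : n%:R <= sq * \sum_p a p.
  rewrite mulr_sumr; have -> : (n%:R : R) = \sum_(p < n) 1 by rewrite sumr_const card_ord.
  by apply: ler_sum => p _; apply: step2.
have step6 : sq * sq <= sq * (cardinality F)%:R.
  rewrite sqsq; apply: (le_trans step5); by rewrite ler_pM2l.
by rewrite ler_pM2l in step6.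
Qed.
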